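(* In the two-player, two-item all-pay auction with budgets described in the context, the marginal strategies $F_{1j},F_{2j}$ induced on an item $j$ by a Nash equilibrium of the two-item game need not constitute a Nash equilibrium of the single-item game on item $j$ (the single-item all-pay auction with budgets $B_1,B_2$, valuations $v_{1j},v_{2j}$, and the same tie-breaking rule). That is, there exist a two-item game, a Nash equilibrium of it, and an item $j\in\{1,2\}$ for which the induced marginals on item $j$ are not a Nash equilibrium of that single-item game.
   Context: Multi-item all-pay auction with budgets. Two players $i\in\{1,2\}$ ($-i$ is the opponent of $i$) and $n$ items $j\in\{1,\dots,n\}$. Player $i$ has budget $B_i\ge0$ and values item $j$ at $v_{ij}>0$. A pure strategy of player $i$ is a vector $(x_{i1},\dots,x_{in})$ with all $x_{ij}\ge0$ and $\sum_j x_{ij}\le B_i$; a mixed strategy is a probability distribution over this set, and $F_{ij}$ denotes its marginal distribution on item $j$. On each item $j$ the higher bid wins the item. Tie-breaking on item $j$: if $x_{1j}=x_{2j}=\min\{B_1,B_2,v_{1j},v_{2j}\}$ and $\min\{B_i,v_{ij}\}>\min\{B_{-i},v_{-ij}\}$ for some $i$, then player $i$ wins item $j$; in all other ties each player wins item $j$ with probability $\frac12$. Player $i$'s utility on item $j$ is $v_{ij}-x_{ij}$ if he wins it and $-x_{ij}$ otherwise, and his total utility is the sum over items. A Nash equilibrium is a pair of mixed strategies in which each player's strategy maximizes his expected total utility against the other's, over all mixed strategies satisfying his budget constraint. The single-item game on item $j$ is the case $n=1$ with valuations $v_{1j},v_{2j}$ and budgets $B_1,B_2$ (pure strategies are bids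 in $[0,B_i]$). Here $n=2$. *)

(* Defs.v *)
From HB Require Import structures.
From mathcomp Require Import all_boot all_order all_algebra.
From mathcomp Require Import all_classical all_reals all_analysis.
Set Implicit Arguments. Unset Strict Implicit. Unset Printing Implicit Defensive.
Import Order.TTheory GRing.Theory Num.Theory.
Local Open Scope classical_set_scope.
Local Open Scope ring_scope.

(* Items are indexed by 'I_2 (item 1 = ord0, item 2 = the other index). *)

Section AllPay.
Variable R : realType.

Definition coord (j : 'I_2) (x : R * R) : R :=
  if j == ord0 then x.1 else x.2.

Lemma measurable_coord (j : 'I_2) : measurable_fun [set: R * R] (coord j).
Proof.
rewrite /coord; case: (j == ord0); [exact: measurable_fst | exact: measurable_snd].
Qed.

HB.instance Definition _ (j : 'I_2) :=
  isMeasurableFun.Build _ _ _ _ (coord j) (measurable_coord j).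

Definition win_prob (Bi Bo vi vo xi xo : R) : R :=
  let m := Num.min (Num.min Bi Bo) (Num.min vi vo) in
  if xo < xi then 1
  else if xi < xo then 0
  else if (xi == m) && (Num.min Bo vo < Num.min Bi vi) then 1
  else if (xi == m) && (Num.min Bi vi < Num.min Bo vo) then 0
  else 2^-1.

Definition item_util (Bi Bo vi vo xi xo : R) : R :=
  vi * win_prob Bi Bo vi vo xi xo - xi.

Definition util2 (Bi Bo : R) (vi vo : 'I_2 -> R) (xi xo : R * R) : R :=
  \sum_(j < 2) item_util Bi Bo (vi j) (vo j) (coord j xi) (coord j xo).

Definition budget2 (B : R) : set (R * R)%type :=
  [set x | 0 <= x.1 /\ 0 <= x.2 /\ x.1 + x.2 <= B].
Definition budget1 (B : R) : set R := [set x : R | 0 <= x <= B].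

Definition mixed2 (B : R) (P : probability (R * R)%type R) : Prop :=
  P (budget2 B) = 1%E.
Definition mixed1 (B : R) (P : probability R R) : Prop :=
  P (budget1 B) = 1%E.

Definition EU1_2 (B1 B2 : R) (v1 v2 : 'I_2 -> R)
    (P1 P2 : probability (R * R)%type R) : \bar R :=
  (\int[P1]_x \int[P2]_y (util2 B1 B2 v1 v2 x y)%:E)%E.
Definition EU2_2 (B1 B2 : R) (v1 v2 : 'I_2 -> R)
    (P1 P2 : probability (R * R)%type R) : \bar R :=
  (\int[P1]_x \int[P2]_y (util2 B2 B1 v2 v1 y x)%:E)%E.

Definition EU1_1 (B1 B2 v1 v2 : R) (P1 P2 : probability R R) : \bar R :=
  (\int[P1]_x \int[P2]_y (item_util B1 B2 v1 v2 x y)%:E)%E.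
Definition EU2_1 (B1 B2 v1 v2 : R) (P1 P2 : probability R R) : \bar R :=
  (\int[P1]_x \int[P2]_y (item_util B2 B1 v2 v1 y x)%:E)%E.

Definition NE2 (B1 B2 : R) (v1 v2 : 'I_2 -> R) (P1 P2 : probability (R * R)%type R)
  : Prop :=
  [/\ mixed2 B1 P1, mixed2 B2 P2,
      (forall Q, mixed2 B1 Q -> (EU1_2 B1 B2 v1 v2 Q P2 <= EU1_2 B1 B2 v1 v2 P1 P2)%E)
    & (forall Q, mixed2 B2 Q -> (EU2_2 B1 B2 v1 v2 P1 Q <= EU2_2 B1 B2 v1 v2 P1 P2)%E)].

Definition NE1 (B1 B2 v1 v2 : R) (P1 P2 : probability R R) : Prop :=
  [/\ mixed1 B1 P1, mixed1 B2 P2,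
      (forall Q, mixed1 B1 Q -> (EU1_1 B1 B2 v1 v2 Q P2 <= EU1_1 B1 B2 v1 v2 P1 P2)%E)
    & (forall Q, mixed1 B2 Q -> (EU2_1 B1 B2 v1 v2 P1 Q <= EU2_1 B1 B2 v1 v2 P1 P2)%E)].

Definition marginal (P : probability (R * R)%type R) (j : 'I_2) : probability R R :=
  distribution P (coord j).

End AllPay.

(* Main.v *)
Require Import Defs.
From HB Require Import structures.
From mathcomp Require Import all_boot all_order all_algebra.
From mathcomp Require Import all_classical all_reals all_analysis.
From mathcomp Require Import lra.
Import Order.TTheory GRing.Theory Num.Theory.
Set Implicit Arguments. Unset Strict Implicit.
Local Open Scope classical_set_scope.
Local Open Scope ring_scope.

Section Aux.
Variable R : realType.
Import HBNNSimple.

Definition wp (x y : R) : R := if y < x then 1 else if x < y then 0 else 2^-1.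

Lemma win_prob_sym (B v x y : R) : win_prob B B v v x y = wp x y.
Proof. by rewrite /win_prob /wp ltxx !andbF. Qed.

Lemma mwp d (T : measurableType d) (f g : T -> R) :
  measurable_fun setT f -> measurable_fun setT g ->
  measurable_fun setT (fun t => wp (f t) (g t)).
Proof.
move=> mf mg; rewrite /wp.
apply: measurable_fun_ifT; first exact: measurable_realfun.measurable_fun_ltr.
  exact: measurable_cst.
apply: measurable_fun_ifT; first exact: measurable_realfun.measurable_fun_ltr.
  exact: measurable_cst.
exact: measurable_cst.
Qed.

Lemma dirac_int_le d (T : measurableType d) (a : T) (F : T -> \bar R) :
  (\int[\d_a]_x F x <= maxe (F a) 0)%E.
Proof.
rewrite integralE.
apply: (@le_trans _ _ (\int[\d_a]_x F^\+ x)%E).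
  rewrite -[leRHS]sube0; apply: leeB => //; apply: integral_ge0 => x _.
  exact: funeneg_ge0.
rewrite ge0_integralE; last by move=> x _; exact: funepos_ge0.
apply: ge_ereal_sup => _ [h /= hle <-].
have E : (h \_ setT) = (h : T -> R).
  by apply/funext => x; rewrite /patch in_setT.
have := @integral_nnsfun _ _ _ \d_a setT measurableT h.
rewrite E => <-.
rewrite integral_dirac //; last first.
  by apply/measurable_realfun.measurable_EFinP; exact: measurable_funPT.
rewrite diracT mul1e.
have := hle a; rewrite /patch in_setT funeposE //.
Qed.


Lemma wp_gt (x y : R) : y < x -> wp x y = 1.
Proof. by rewrite /wp => ->. Qed.
Lemma wp_lt (x y : R) : x < y -> wp x y = 0.
Proof. by rewrite /wp => h; rewrite h ltNge (ltW h). Qed.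
Lemma wp_eq (x : R) : wp x x = 2^-1.
Proof. by rewrite /wp ltxx. Qed.

Definition vv : 'I_2 -> R := fun j => if j == ord0 then 3 else 1.

Definition U (x y : R * R) : R :=
  (3 * wp x.1 y.1 - x.1) + (1 * wp x.2 y.2 - x.2).

Lemma util2E (x y : R * R) : util2 1 1 vv vv x y = U x y.
Proof. by rewrite /util2 big_ord_recr big_ord_recr big_ord0 /= add0r /item_util !win_prob_sym /coord /U /vv. Qed.

Lemma mU d (T : measurableType d) (f g : T -> R * R) :
  measurable_fun setT f -> measurable_fun setT g ->
  measurable_fun setT (fun t => util2 1 1 vv vv (f t) (g t)).
Proof.
move=> mf mg.
have -> : (fun t => util2 1 1 vv vv (f t) (g t)) = (fun t => U (f t) (g t)).
  by apply/funext => t; rewrite util2E.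
have m1f : measurable_fun setT (fun t => (f t).1) by exact: measurableT_comp mf.
have m2f : measurable_fun setT (fun t => (f t).2) by exact: measurableT_comp mf.
have m1g : measurable_fun setT (fun t => (g t).1) by exact: measurableT_comp mg.
have m2g : measurable_fun setT (fun t => (g t).2) by exact: measurableT_comp mg.
rewrite /U.
apply: measurable_realfun.measurable_funD; apply: measurable_realfun.measurable_funB => //; apply: measurable_realfun.measurable_funM;
  by [exact: measurable_cst | exact: mwp].
Qed.

Lemma dd d (T : measurableType d) (a b : T) (G : T -> T -> R) :
  (forall x, measurable_fun setT (G x)) -> (forall y, measurable_fun setT (G^~ y)) ->
  (\int[\d_a]_x \int[\d_b]_y (G x y)%:E = (G a b)%:E)%E.
Proof.
move=> m1 m2.
rewrite (eq_integral (fun x => (G x b)%:E)); last first.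
  move=> x _; rewrite integral_dirac ?diracT ?mul1e//.
  by apply/measurable_realfun.measurable_EFinP; exact: m1.
rewrite integral_dirac ?diracT ?mul1e//.
by apply/measurable_realfun.measurable_EFinP; exact: m2.
Qed.

Lemma mbudget : measurable (budget2 (1 : R)).
Proof.
have h (f g : R * R -> R) : measurable_fun setT f -> measurable_fun setT g ->
    measurable [set x | f x <= g x].
  move=> mf mg.
  have := @measurable_realfun.measurable_fun_ler _ _ _ setT f g mf mg measurableT [set true] I.
  by rewrite setTI.
apply: measurableI; first by apply: h; [exact: measurable_cst | exact: measurable_fst].
apply: measurableI; first by apply: h; [exact: measurable_cst | exact: measurable_snd].
apply: h; last exact: measurable_cst.
exact: measurable_realfun.measurable_funD measurable_fst measurable_snd.
Qed.

Lemma Ub (x y : R * R) : budget2 1 x -> y = (1, 0) -> U x y <= 1.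
Proof.
case: x => x1 x2 [/= h1 [h2 h3]] ->; rewrite /U /=.
case: (ltgtP x1 1) => e1.
- rewrite wp_lt //.
  case: (ltgtP x2 0) => e2; [lra | rewrite wp_gt //; lra | rewrite e2 wp_eq; lra].
- lra.
- rewrite e1 wp_eq.
  case: (ltgtP x2 0) => e2; [lra | lra | rewrite e2 wp_eq; lra].
Qed.


Lemma intQ_le (Q : probability (R * R)%type R) (f : R * R -> R) :
  measurable_fun setT f -> Q (budget2 1) = 1%E ->
  (forall x, budget2 1 x -> f x <= 1) -> (\int[Q]_x (f x)%:E <= 1)%E.
Proof.
move=> mf Q1 fle.
rewrite integralE.
apply: (@le_trans _ _ (\int[Q]_x (fun x => (f x)%:E)^\+ x)%E).
  rewrite -[leRHS]sube0; apply: leeB => //; apply: integral_ge0 => x _.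
  exact: funeneg_ge0.
apply: (@le_trans _ _ (\int[Q]_x (cst 1%E) x)%E); last first.
  rewrite integral_cst // mul1e.
  have H : forall x : \bar R, x = 1%E -> (x <= 1)%E by move=> x ->.
  exact: (H _ (probability_setT Q)).
apply: (@ae_ge0_le_integral _ _ _ Q setT measurableT).
- by move=> x _; exact: funepos_ge0.
- apply: measurable_realfun.measurable_funepos.
  by apply/measurable_realfun.measurable_EFinP.
- by move=> x _.
- exact: measurable_cst.
- exists (~` budget2 1); split.
  + exact: measurableC mbudget.
  + have e := probability_setC Q mbudget.
    by rewrite Q1 subee in e.
  + move=> x /= hx; apply: contra_not hx => hb _.
    rewrite funeposE; rewrite ge_max; apply/andP; split => //.
    by rewrite lee_fin; apply: fle.
Qed.

Lemma marg_int (p : R * R) (j : 'I_2) (f : R -> \bar R) :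
  (\int[@marginal R \d_p j]_x f x = \int[\d_(Defs.coord j p)]_x f x)%E.
Proof.
apply: eq_measure_integral => A mA _.
rewrite /marginal /distribution /pushforward /= !diracE.
by congr ((_ : bool)%:R%:E); apply/idP/idP => /set_mem h; apply/mem_set.
Qed.


Lemma mIU (f g : R -> R) : measurable_fun setT f -> measurable_fun setT g ->
  measurable_fun setT (fun t => item_util 1 1 1 1 (f t) (g t)).
Proof.
move=> mf mg.
have -> : (fun t => item_util 1 1 1 1 (f t) (g t)) = (fun t => 1 * wp (f t) (g t) - f t).
  by apply/funext => t; rewrite /item_util win_prob_sym.
apply: measurable_realfun.measurable_funB => //; apply: measurable_realfun.measurable_funM;
  by [exact: measurable_cst | exact: mwp].
Qed.

Lemma marg_int2 (a : R) (q : R * R) (j : 'I_2) (G : R -> R -> R) :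
  (\int[\d_a]_x \int[@marginal R \d_q j]_y (G x y)%:E =
   \int[\d_a]_x \int[\d_(Defs.coord j q)]_y (G x y)%:E)%E.
Proof. by apply: eq_integral => x _; exact: marg_int. Qed.

Lemma marg_int3 (p q : R * R) (j : 'I_2) (G : R -> R -> R) :
  (\int[@marginal R \d_p j]_x \int[@marginal R \d_q j]_y (G x y)%:E =
   \int[\d_(Defs.coord j p)]_x \int[\d_(Defs.coord j q)]_y (G x y)%:E)%E.
Proof. by rewrite marg_int; apply: eq_integral => x _; exact: marg_int. Qed.

End Aux.
Arguments vv {R}.
Unset Implicit Arguments. Set Strict Implicit.

Theorem corollary1 (R : realType) :
  exists (B1 B2 : R) (v1 v2 : 'I_2 -> R),
    [/\ 0 <= B1, 0 <= B2, (forall j, 0 < v1 j /\ 0 < v2 j) &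
    exists P1 P2 : probability (R * R)%type R,
      NE2 B1 B2 v1 v2 P1 P2 /\
      exists j : 'I_2,
        ~ NE1 B1 B2 (v1 j) (v2 j) (marginal P1 j) (marginal P2 j)].
Proof.
exists 1, 1, vv, vv; split => //.
  by move=> j; rewrite /vv; case: ifP => _; split; lra.
have b10 : budget2 (1 : R) (1, 0) by rewrite /budget2 /=; split; lra.
have val : util2 (R:=R) 1 1 vv vv (1, 0) (1, 0) = 1.
  by rewrite util2E /U /= wp_eq wp_eq; lra.
exists (\d_((1, 0) : R * R) : probability (R * R)%type R), (\d_((1, 0) : R * R) : probability (R * R)%type R); split.
  split.
  - by rewrite /mixed2 /= /dirac indicE mem_set.
  - by rewrite /mixed2 /= /dirac indicE mem_set.
  - move=> Q hQ; rewrite /EU1_2.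
    rewrite (@dd _ _ _ _ _ (fun x y => util2 1 1 vv vv x y)); last 2 first.
    + by move=> x; apply: (@mU _ _ _ (fun _ => x) id); [exact: measurable_cst | exact: measurable_id].
    + by move=> y; apply: (@mU _ _ _ id (fun _ => y)); [exact: measurable_id | exact: measurable_cst].
    rewrite val.
    rewrite (eq_integral (fun x => (util2 1 1 vv vv x (1, 0))%:E)); last first.
      move=> x _; rewrite integral_dirac ?diracT ?mul1e //.
      by apply/measurable_realfun.measurable_EFinP; apply: (@mU _ _ _ (fun _ => x) id); [exact: measurable_cst | exact: measurable_id].
    apply: intQ_le => //.
      by apply: (@mU _ _ _ id (fun _ => (1, 0))); [exact: measurable_id | exact: measurable_cst].
    by move=> x bx; rewrite util2E; exact: Ub.
  - move=> Q hQ; rewrite /EU2_2.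
    rewrite (@dd _ _ _ _ _ (fun x y => util2 1 1 vv vv y x)); last 2 first.
    + by move=> x; apply: (@mU _ _ _ id (fun _ => x)); [exact: measurable_id | exact: measurable_cst].
    + by move=> y; apply: (@mU _ _ _ (fun _ => y) id); [exact: measurable_cst | exact: measurable_id].
    rewrite val.
    apply: le_trans (dirac_int_le _ _) _.
    rewrite ge_max; apply/andP; split => //.
    apply: intQ_le => //.
      by apply: (@mU _ _ _ id (fun _ => (1, 0))); [exact: measurable_id | exact: measurable_cst].
    by move=> x bx; rewrite util2E; exact: Ub.
exists ord_max => -[_ _ H _].
have := H (\d_(4^-1 : R) : probability R R).
rewrite /EU1_1 marg_int2 marg_int3.
have -> : vv ord_max = (1 : R) by [].
rewrite (@dd _ _ _ _ _ (fun x y => item_util 1 1 1 1 x y)); last 2 first.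
  + by move=> x; apply: (@mIU _ (fun _ => x) id); [exact: measurable_cst | exact: measurable_id].
  + by move=> y; apply: (@mIU _ id (fun _ => y)); [exact: measurable_id | exact: measurable_cst].
rewrite (@dd _ _ _ _ _ (fun x y => item_util 1 1 1 1 x y)); last 2 first.
  + by move=> x; apply: (@mIU _ (fun _ => x) id); [exact: measurable_cst | exact: measurable_id].
  + by move=> y; apply: (@mIU _ id (fun _ => y)); [exact: measurable_id | exact: measurable_cst].
rewrite /Defs.coord /=.
have q4 : (0 : R) < 4^-1 by rewrite invr_gt0.
have h : mixed1 1 (\d_(4^-1 : R) : probability R R).
  rewrite /mixed1 /= /dirac indicE mem_set //= /budget1; apply/andP; split; lra.
move=> /(_ h); rewrite lee_fin /item_util !win_prob_sym wp_gt // wp_eq; lra.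
Qed.
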